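(* Let $k\geq 3$, $t,q\geq k-1$, $\chi>\binom{q}{k-1}$ and $n\geq 3(k-1)$ be integers with $n\equiv 0\pmod{k-1}$. Let $H$ be the $k$-graph on vertex set $A_1\sqcup\dots\sqcup A_\chi$, where $|A_i|>(\chi-1)(k-2)+\max\{\tau(k-1,t),q\}$ for all $i\in[\chi-1]$ and $|A_\chi|=t$, whose edges are all $k$-subsets $e$ of the vertex set such that $|e\cap A_i|=k-1$ for some $i\in[\chi]$. Then $R(C^{(k)}_{n,1},H)>(\chi-1)(n-1)+\max\{\tau(k-1,t),q\}$.
   Context: A $k$-graph is a $k$-uniform hypergraph. $R(G,H)$ is the least $N$ such that every red/blue colouring of the edges of $K^{(k)}_N$ contains a red copy of $G$ or a blue copy of $H$. For $n=q'(k-1)$, the loose cycle $C^{(k)}_{n,1}$ has vertices $v_1,\dots,v_n$ and edges $\{v_{(i-1)(k-1)+1},\dots,v_{i(k-1)+1}\}$ for $i\in[q']$, with $v_{n+1}=v_1$. For integers $j,\alpha\ge1$, $\tau(j,\alpha)$ is the largest $N$ such that some $j$-uniform hypergraph on $N$ vertices has independence number less than $\alpha$ and no two edges meeting in exactly one vertex. *)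

(* Defs.v *)
From mathcomp Require Import all_boot.
Set Implicit Arguments. Unset Strict Implicit. Unset Printing Implicit Defensive.

Definition uniform (V : finType) (k : nat) (E : {set {set V}}) : Prop :=
  forall e, e \in E -> #|e| = k.

Definition has_copy (N : nat) (c : {set 'I_N} -> bool) (b : bool)
  (V : finType) (E : {set {set V}}) : Prop :=
  exists f : V -> 'I_N, injective f /\ forall e, e \in E -> c (f @: e) = b.

(* N -> (G,H): every red(true)/blue(false) colouring of the edges of K_N
   contains a red copy of G or a blue copy of H. *)
Definition ramsey_arrow (N : nat) (V1 : finType) (E1 : {set {set V1}})
  (V2 : finType) (E2 : {set {set V2}}) : Prop :=
  forall c : {set 'I_N} -> bool, has_copy c true E1 \/ has_copy c false E2.

Definition loose_cycle (k n : nat) : {set {set 'I_n}} :=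
  [set [set v : 'I_n | [exists j : 'I_k, val v == (i * (k - 1) + j) %% n]]
     | i : 'I_(n %/ (k - 1))].

Definition independent (V : finType) (E : {set {set V}}) (S : {set V}) : bool :=
  [forall e in E, ~~ (e \subset S)].

Definition tau_witness (j alpha N : nat) : Prop :=
  exists E : {set {set 'I_N}},
    uniform j E /\
    (forall S : {set 'I_N}, independent E S -> #|S| < alpha) /\
    (forall e1 e2, e1 \in E -> e2 \in E -> e1 != e2 -> #|e1 :&: e2| != 1).

Definition is_tau (j alpha T : nat) : Prop :=
  tau_witness j alpha T /\ forall N, tau_witness j alpha N -> N <= T.

(* The k-graph H on A_1 ⊔ ... ⊔ A_chi, with |A_i| = a i: all k-subsets e with
   |e ∩ A_i| = k-1 for some i. *)
Definition Hvert (chi : nat) (a : 'I_chi -> nat) : finType :=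
  {i : 'I_chi & 'I_(a i)}.

Definition part (chi : nat) (a : 'I_chi -> nat) (i : 'I_chi) : {set Hvert a} :=
  [set x : Hvert a | tag x == i].

Definition Hgraph (k chi : nat) (a : 'I_chi -> nat) : {set {set Hvert a}} :=
  [set e : {set Hvert a} | (#|e| == k) && [exists i, #|e :&: part a i| == k - 1]].

(* Main.v *)
Require Import Defs.
From mathcomp Require Import all_boot zify.
Set Implicit Arguments. Unset Strict Implicit. Unset Printing Implicit Defensive.


Definition copyW (W : finType) (cW : {set W} -> bool) (b : bool)
  (V : finType) (E : {set {set V}}) : Prop :=
  exists f : V -> W, injective f /\ forall e, e \in E -> cW (f @: e) = b.

Lemma transfer (N : nat) (W : finType) (cW : {set W} -> bool)
  (V1 : finType) (E1 : {set {set V1}}) (V2 : finType) (E2 : {set {set V2}}) :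
  N <= #|W| -> ~ copyW cW true E1 -> ~ copyW cW false E2 ->
  ~ ramsey_arrow N E1 E2.
Proof.
move=> hN h1 h2 hR.
pose h : 'I_N -> W := fun i => enum_val (widen_ord hN i).
have hinj : injective h.
  move=> i j /enum_val_inj /(congr1 val) /= eij; exact: val_inj.
case: (hR (fun S => cW (h @: S))) => [[f [finj fc]]|[f [finj fc]]].
- apply: h1; exists (h \o f); split; first exact: inj_comp.
  by move=> e he; rewrite imset_comp fc.
- apply: h2; exists (h \o f); split; first exact: inj_comp.
  by move=> e he; rewrite imset_comp fc.
Qed.

Lemma sub_of_card (T : finType) (S : {set T}) (r : nat) :
  r <= #|S| -> exists s : {set T}, s \subset S /\ #|s| = r.
Proof.
move=> hr; exists [set x in take r (enum S)]; split.
  apply/subsetP => x; rewrite inE => /mem_take; by rewrite mem_enum.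
rewrite cardsE (card_uniqP _); last by apply: take_uniq; exact: enum_uniq.
by rewrite size_take -cardE; case: ltngtP hr.
Qed.


Definition Wt (m c b : nat) : finType := ('I_m + 'I_c * 'I_b)%type.
Definition B0 (m c b : nat) : {set Wt m c b} :=
  [set x | if x is inl _ then true else false].
Definition Blk (m c b : nat) (j : 'I_c) : {set Wt m c b} :=
  [set x | if x is inr p then p.1 == j else false].
Definition red (m c b : nat) (Fam : 'I_c -> {set {set Wt m c b}})
  (E : {set Wt m c b}) : bool :=
  [exists j, E \subset Blk m b j] ||
  [exists j, [exists s in Fam j, [exists v in Blk m b j, E == s :|: [set v]]]].

Lemma card_B0 m c b : #|B0 m c b| = m.
Proof.
have -> : B0 m c b = [set inl i | i : 'I_m].
  apply/setP => x; rewrite !inE; case: x => [i|p].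
    by apply/esym/imsetP; exists i.
  by apply/esym/imsetP => -[].
rewrite card_imset ?card_ord //; by move=> ? ? [].
Qed.

Lemma card_Blk m c b j : #|Blk m b j : {set Wt m c b}| = b.
Proof.
have -> : Blk m b j = [set (inr (j, y) : Wt m c b) | y : 'I_b].
  apply/setP => x; rewrite !inE; case: x => [i|[j' y]] /=.
    by apply/esym/imsetP => -[].
  apply/eqP/imsetP => [->|[y' _ [-> _]]] //; by exists y.
rewrite card_imset ?card_ord //; by move=> ? ? [].
Qed.

Lemma B0_Blk m c b j (x : Wt m c b) : x \in B0 m c b -> x \in Blk m b j -> False.
Proof. by rewrite !inE; case: x. Qed.

Lemma Blk_disj m c b j j' (x : Wt m c b) : x \in Blk m b j -> x \in Blk m b j' -> j = j'.
Proof. by rewrite !inE; case: x => // p /eqP <- /eqP. Qed.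

Lemma B0_or_Blk m c b (x : Wt m c b) : x \notin B0 m c b -> exists j, x \in Blk m b j.
Proof. rewrite !inE; case: x => // p _; exists p.1; by rewrite inE. Qed.

Definition cls m c b (x : Wt m c b) : 'I_c.+1 :=
  if x is inr p then lift ord0 p.1 else ord0.

Lemma pigeon m c b r (A : {set Wt m c b}) :
  m + c * r < #|A| -> exists j, r < #|A :&: Blk m b j|.
Proof.
move=> hA.
have e : #|A| = \sum_(i : 'I_c.+1) #|[set x in A | cls x == i]|.
  rewrite -sum1_card (partition_big (@cls m c b) predT) //=.
  apply: eq_bigr => i _; rewrite -sum1_card; apply: eq_bigl => x; by rewrite inE.
rewrite e big_ord_recl in hA.
have h0 : #|[set x in A | cls x == ord0]| <= m.
  apply: (leq_trans _ (eq_leq (card_B0 m c b))); apply: subset_leq_card; apply/subsetP => x.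
  rewrite !inE; case: x => // p; by rewrite /cls andbF.
case: (boolP [exists j, r < #|A :&: Blk m b j|]) => [/existsP //|/existsPn hn]; exfalso.
have : \sum_(i < c) #|[set x in A | cls x == lift ord0 i]| <= c * r.
  apply: (@leq_trans (\sum_(i < c) r)); last by rewrite sum_nat_const card_ord.
  apply: leq_sum => j _; rewrite leqNgt; apply: (contra _ (hn j)) => h.
  apply: leq_trans h _; apply: subset_leq_card; apply/subsetP => x.
  rewrite !inE; case: x => [i|p] /=; first by rewrite andbF.
  case/andP => -> /eqP hl; by rewrite (lift_inj hl) eqxx.
move=> hs; move: hA h0 hs; lia.
Qed.


Lemma card_part chi (a : 'I_chi -> nat) i : #|part a i| = a i.
Proof.
have -> : part a i = [set (Tagged (fun i => 'I_(a i)) y : Hvert a) | y : 'I_(a i)].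
  apply/setP => x; rewrite !inE; apply/eqP/imsetP.
    move=> <-; exists (tagged x) => //; by rewrite taggedK.
  by case=> y _ ->.
rewrite card_imset ?card_ord //; exact: eq_from_Tagged.
Qed.

Lemma Hedge k chi (a : 'I_chi -> nat) i (S : {set Hvert a}) w :
  1 <= k -> S \subset part a i -> #|S| = k - 1 -> w \notin part a i ->
  w |: S \in Hgraph k a.
Proof.
move=> hk hS cS hw; rewrite inE; apply/andP; split.
  rewrite cardsU1 cS; have -> : w \notin S by apply: contra hw; apply: (subsetP hS).
  apply/eqP; lia.
apply/existsP; exists i.
have -> : (w |: S) :&: part a i = S.
  rewrite setIUl (setIidPl hS); apply/setP => x; rewrite !inE.
  case: (x =P w) => [->|] //=; move: hw; rewrite inE; by case: (tag w == i).
by rewrite cS.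
Qed.

Lemma preim_sub (V W : finType) (f : V -> W) (P : {set V}) (s : {set W}) :
  injective f -> s \subset f @: P ->
  f @: [set y in P | f y \in s] = s /\ #|[set y in P | f y \in s]| = #|s|.
Proof.
move=> finj hs.
have fS : f @: [set y in P | f y \in s] = s.
  apply/setP => x; apply/imsetP/idP => [[y]|hx].
    by rewrite inE => /andP [_ hy] ->.
  have := subsetP hs x hx; case/imsetP => y hy ex; exists y => //.
  by rewrite inE hy -ex hx.
split => //; have := card_imset [set y in P | f y \in s] finj; by rewrite fS => ->.
Qed.

Lemma noblueH k t m c b (a : 'I_c.+1 -> nat) (Fam : 'I_c -> {set {set Wt m c b}}) :
  2 <= k -> k - 1 <= t ->
  (forall i : 'I_c.+1, i < c -> c * (k - 2) + m < a i) -> a ord_max = t ->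
  (forall j s, s \in Fam j -> s \subset B0 m c b /\ #|s| = k - 1) ->
  (forall S : {set Wt m c b}, S \subset B0 m c b -> #|S| = t ->
     exists j s, s \in Fam j /\ s \subset S) ->
  ~ copyW (red Fam) false (Hgraph k a).
Proof.
move=> hk ht hbig hlast hFam hblock [f [finj fblue]].
have redE : forall e, e \in Hgraph k a -> red Fam (f @: e) -> False.
  by move=> e he; rewrite fblue.
have excl : forall (i : 'I_c.+1) (j : 'I_c) (S : {set Hvert a}), S \subset part a i -> #|S| = k - 1 ->
    f @: S \subset Blk m b j -> forall w, w \notin part a i ->
    f w \in Blk m b j -> False.
  move=> i j S hS cS hfS w hw hfw; apply: (redE (w |: S)).
    by apply: Hedge => //; lia.
  apply/orP; left; apply/existsP; exists j; rewrite imsetU1.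
  apply/subsetP => x; rewrite in_setU1 => /orP [/eqP -> //|]; exact: (subsetP hfS).
pose wid (ii : 'I_c) : 'I_c.+1 := widen_ord (leqnSn c) ii.
pose Pj ii j := [exists S : {set Hvert a}, [&& S \subset part a (wid ii),
                  #|S| == k - 1 & f @: S \subset Blk m b j]].
have big : forall ii, exists j, Pj ii j.
  move=> ii.
  have hp : m + c * (k - 2) < #|f @: part a (wid ii)|.
    rewrite card_imset // card_part addnC; apply: hbig; by rewrite /= ltn_ord.
  have [j hj] := @pigeon m c b (k - 2) (f @: part a (wid ii)) hp.
  have [s [hs cs]] := @sub_of_card _ _ (k - 1) (ltac:(lia) : k - 1 <= #|f @: part a (wid ii) :&: Blk m b j|).
  have [fS cS] := @preim_sub _ _ f (part a (wid ii)) s finj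
    (subset_trans hs (subsetIl _ _)).
  exists j; apply/existsP; exists [set y in part a (wid ii) | f y \in s].
  apply/and3P; split.
  - by apply/subsetP => y; rewrite inE => /andP[].
  - by rewrite cS cs.
  - rewrite fS; exact: (subset_trans hs (subsetIr _ _)).
pose J ii := if [pick j | Pj ii j] is Some j then j else ii.
have hJ : forall ii, Pj ii (J ii).
  move=> ii; rewrite /J; case: pickP => [j //| h].
  by have [j hj] := big ii; rewrite h in hj.
have widP : forall ii (w : Hvert a), w \in part a (wid ii) -> w \in part a ord_max -> False.
  move=> ii w; rewrite !inE => /eqP -> /eqP /(congr1 val) /=; move: (ltn_ord ii); lia.
have widQ : forall ii ii' (w : Hvert a), w \in part a (wid ii) -> w \in part a (wid ii') -> ii = ii'.
  move=> ii ii' w; rewrite !inE => /eqP -> /eqP /(congr1 val) /= e; exact: val_inj.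
have nonemp : forall (S : {set Hvert a}), #|S| = k - 1 -> exists w, w \in S.
  by move=> S cS; apply/set0Pn; rewrite -card_gt0 cS; lia.
have Jinj : injective J.
  move=> i1 i2 e.
  case/existsP: (hJ i1) => S1 /and3P [s1 /eqP c1 f1].
  case/existsP: (hJ i2) => S2 /and3P [s2 /eqP c2 f2].
  have [w hw] := nonemp S2 c2.
  case: (i1 =P i2) => // hne; exfalso.
  apply: (excl _ _ _ s1 c1 f1 w).
    apply/negP => hw1; apply: hne; apply: (widQ _ _ w hw1); exact: (subsetP s2).
  rewrite e; apply: (subsetP f2); exact: imset_f.
have Jsurj : forall j, exists ii, J ii = j.
  move=> j; have := inj_card_onto Jinj (leqnn _) j; case/codomP => ii ->; by exists ii.
have lastB0 : forall y, y \in part a ord_max -> f y \in B0 m c b.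
  move=> y hy; apply/negPn/negP => hy'.
  have [j hj] := B0_or_Blk hy'.
  have [ii eii] := Jsurj j.
  case/existsP: (hJ ii) => S /and3P [s1 /eqP c1 f1].
  rewrite -eii in hj; apply: (excl _ _ _ s1 c1 f1 y) => //.
  apply/negP => hy2; exact: (widP ii y hy2 hy).
have [j [s [hsF hsS]]] := hblock (f @: part a ord_max)
  (ltac:(apply/subsetP => x /imsetP [y hy ->]; exact: lastB0))
  (ltac:(by rewrite card_imset // card_part)).
have [ii eii] := Jsurj j.
case/existsP: (hJ ii) => S /and3P [s1 /eqP c1 f1].
have [w hw] := nonemp S c1.
have [fS cS] := @preim_sub _ _ f (part a ord_max) s finj hsS.
have [_ cs] := hFam j s hsF.
apply: (redE (w |: [set y in part a ord_max | f y \in s])).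
  apply: (@Hedge k _ a ord_max); first lia.
  - by apply/subsetP => y; rewrite inE => /andP[].
  - by rewrite cS cs.
  - apply/negP => hw2; apply: (widP ii w _ hw2); exact: (subsetP s1).
apply/orP; right; apply/existsP; exists j; apply/existsP; exists s.
rewrite hsF /=; apply/existsP; exists (f w).
rewrite -eii (subsetP f1) ?imset_f //= imsetU1 fS setUC.
by [].
Qed.


Lemma redP m c b (Fam : 'I_c -> {set {set Wt m c b}}) E :
  red Fam E ->
  (exists j, E \subset Blk m b j) \/
  (exists j s v, [/\ s \in Fam j, v \in Blk m b j & E = s :|: [set v]]).
Proof.
case/orP => [/existsP [j hj]|/existsP [j /existsP [s /andP [hs /existsP [v /andP [hv /eqP e]]]]]].
  by left; exists j.
by right; exists j, s, v.
Qed.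


Lemma sig_out m c b (s : {set Wt m c b}) v y :
  s \subset B0 m c b -> y \in s :|: [set v] -> y \notin B0 m c b -> y = v.
Proof.
move=> hs; rewrite in_setU in_set1 => /orP [hy|/eqP -> //]; by rewrite (subsetP hs y hy).
Qed.

Lemma sig_in m c b (s : {set Wt m c b}) j v y :
  v \in Blk m b j -> y \in s :|: [set v] -> y \in B0 m c b -> y \in s.
Proof.
move=> hv; rewrite in_setU in_set1 => /orP [//|/eqP -> hy]; exfalso; exact: (B0_Blk hy hv).
Qed.

Lemma all_internal m c b n L km (f : 'I_n -> Wt m c b) (Ed : nat -> {set Wt m c b})
  (x : nat -> Wt m c b) :
  injective f -> n = L * km -> b < n -> 0 < km ->
  (forall s, Ed s = Ed (s %% L)) ->
  (forall s, x (s.+1) \in Ed s) -> (forall s, x (s.+1) \in Ed (s.+1)) ->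
  (forall p : 'I_n, f p \in Ed (p %/ km)) ->
  (forall s, exists j, Ed s \subset Blk m b j) -> False.
Proof.
move=> finj hn hb hkm Hmod H1 H1' H4 hint.
have [j0 hj0] := hint 0.
have all : forall s, Ed s \subset Blk m b j0.
  elim=> // s IH; have [j hj] := hint s.+1.
  suff e : j = j0 by rewrite -e.
  apply: (Blk_disj (x := x s.+1)); [exact: (subsetP hj) | exact: (subsetP IH)].
have : #|f @: [set: 'I_n]| <= b.
  apply: (@leq_trans #|Blk m b j0|); last by rewrite card_Blk.
  apply: subset_leq_card; apply/subsetP => y /imsetP [p _ ->].
  exact: (subsetP (all _) _ (H4 p)).
rewrite card_imset // cardsT card_ord; lia.
Qed.

Lemma modS_neq L s : 2 <= L -> s %% L <> s.+1 %% L.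
Proof.
move=> hL e; have : (s + 0 == s + 1 %[mod L]) by rewrite addn0 addn1 e.
by rewrite eqn_modDl !modn_small //; lia.
Qed.

Lemma cycT m c b n L km (f : 'I_n -> Wt m c b) (Ed : nat -> {set Wt m c b})
  (x : nat -> Wt m c b) (Fam : 'I_c -> {set {set Wt m c b}}) :
  injective f -> n = L * km -> b < n -> 2 <= km -> 2 <= L ->
  (forall s, Ed s = Ed (s %% L)) ->
  (forall s, x s \in Ed s) -> (forall s, x (s.+1) \in Ed s) ->
  (forall s s', s %% L <> s' %% L -> #|Ed s :&: Ed s'| <= 1) ->
  (forall s, x s <> x s.+1) ->
  (forall p : 'I_n, f p \in Ed (p %/ km)) ->
  (forall s, red Fam (Ed s)) ->
  (forall j s, s \in Fam j -> s \subset B0 m c b /\ #|s| = km) ->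
  (forall j j' s s', s \in Fam j -> s' \in Fam j' -> #|s :&: s'| = 1 -> s = s') ->
  False.
Proof.
move=> finj hn hb hkm hL Hmod H1 H1b H2 H3 H4 Hred HF PT.
have notB0 : forall s, x s.+1 \notin B0 m c b.
  move=> s; apply/negP => hx.
  have getsig : forall t, x s.+1 \in Ed t -> exists j sg, sg \in Fam j /\ x s.+1 \in sg /\ sg \subset Ed t.
    move=> t ht; case: (redP (Hred t)) => [[j hj]|[j [sg [v [hsg hv e]]]]].
      exfalso; exact: (B0_Blk hx (subsetP hj _ ht)).
    exists j, sg; split => //; split; first by apply: (sig_in hv _ hx); rewrite -e.
    by rewrite e; apply: subsetUl.
  have [j [sg [hsg [hxs ssub]]]] := getsig s (H1b s).
  have [j' [sg' [hsg' [hxs' ssub']]]] := getsig s.+1 (H1 s.+1).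
  have c1 : #|sg :&: sg'| <= 1.
    apply: (@leq_trans #|Ed s :&: Ed s.+1|); last exact: (H2 s s.+1 (@modS_neq L s hL)).
    apply: subset_leq_card; exact: setISS.
  have c2 : 0 < #|sg :&: sg'| by apply/card_gt0P; exists (x s.+1); rewrite inE hxs hxs'.
  have e := PT _ _ _ _ hsg hsg' (ltac:(lia)).
  move: c1; rewrite e setIid (HF _ _ hsg').2; lia.
have intS : forall s, exists j, Ed s.+1 \subset Blk m b j.
  move=> s; case: (redP (Hred s.+1)) => [//|[j [sg [v [hsg hv e]]]]].
  exfalso; apply: (H3 s.+1).
  have h1 : x s.+1 = v by apply: (sig_out (HF _ _ hsg).1 _ (notB0 s)); rewrite -e; exact: H1.
  have h2 : x s.+2 = v by apply: (sig_out (HF _ _ hsg).1 _ (notB0 s.+1)); rewrite -e; exact: H1b.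
  by rewrite h1 h2.
apply: (all_internal finj hn hb (ltac:(lia)) Hmod H1b (fun s => H1 s.+1) H4).
case=> [|s]; last exact: intS.
have [j hj] := intS L.-1; exists j.
have -> : Ed 0 = Ed L by rewrite (Hmod L) modnn.
have -> : L = L.-1.+1 by lia.
exact: hj.
Qed.

Lemma modD_neq L s e : 0 < e < L -> s %% L <> (s + e) %% L.
Proof.
move=> /andP [h0 h1] eq; have : (s + 0 == s + e %[mod L]) by rewrite addn0 eq.
rewrite eqn_modDl mod0n modn_small // eq_sym; move/eqP; lia.
Qed.

Lemma cycQ m c b n L km (f : 'I_n -> Wt m c b) (Ed : nat -> {set Wt m c b})
  (x : nat -> Wt m c b) (Fam : 'I_c -> {set {set Wt m c b}}) :
  injective f -> n = L * km -> b < n -> 2 <= km -> 2 <= L ->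
  (forall s, Ed s = Ed (s %% L)) -> (forall s, x s = x (s %% L)) ->
  (forall s, x s \in Ed s) -> (forall s, x (s.+1) \in Ed s) ->
  (forall s s', s %% L <> s' %% L -> #|Ed s :&: Ed s'| <= 1) ->
  (forall s, x s <> x s.+1) ->
  (forall p : 'I_n, f p \in Ed (p %/ km)) ->
  (forall s, red Fam (Ed s)) ->
  (forall j s, s \in Fam j -> s \subset B0 m c b /\ #|s| = km) ->
  (forall j s s', s \in Fam j -> s' \in Fam j -> s = s') ->
  m < L * (km - 1) ->
  False.
Proof.
move=> finj hn hb hkm hL Hmod Hxmod H1 H1b H2 H3 H4 Hred HF PQ hm.
pose intb s := [exists j, Ed s \subset Blk m b j].
have sigP : forall s, ~~ intb s -> exists j sg v,
    [/\ sg \in Fam j, v \in Blk m b j & Ed s = sg :|: [set v]].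
  move=> s hs; case: (redP (Hred s)) => [[j hj]|//].
  by move/negP: hs; case; apply/existsP; exists j.
case: (boolP [forall s : 'I_L, ~~ intb s]) => [/forallP hall|].
  have hall' : forall s, ~~ intb s.
    by move=> s; rewrite /intb Hmod; exact: (hall (Ordinal (ltn_pmod s (ltnW hL)))).
  have divlt : forall p : 'I_n, p %/ km < L.
    move=> p; rewrite ltn_divLR; last lia.
    have := ltn_ord p; rewrite {2}hn; by [].
  pose g (p : 'I_n) : 'I_L := Ordinal (divlt p).
  pose NB := [set p : 'I_n | f p \notin B0 m c b].
  have c1 : #|NB| <= L.
    rewrite -(card_in_imset (f := g)); first by rewrite -[X in _ <= X]card_ord; exact: max_card.
    move=> p p' hp0 hp0' /(congr1 val) /= e.
    have hp : f p \notin B0 m c b by move: hp0; rewrite !inE.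
    have hp' : f p' \notin B0 m c b by move: hp0'; rewrite !inE.
    apply: finj.
    have [j [sg [v [hsg hv ee]]]] := sigP _ (hall' (p %/ km)).
    have hfp := H4 p; have hfp' := H4 p'.
    rewrite ee in hfp; rewrite -e ee in hfp'.
    by rewrite (sig_out (HF _ _ hsg).1 hfp hp) (sig_out (HF _ _ hsg).1 hfp' hp').
  have c2 : #|~: NB| <= m.
    rewrite -(card_imset _ finj); apply: (@leq_trans #|B0 m c b|); last by rewrite card_B0.
    apply: subset_leq_card; apply/subsetP => y /imsetP [p hp ->].
    by move: hp; rewrite !inE negbK.
  have := cardsC NB; rewrite card_ord => e.
  have : L * km <= L + m by rewrite -hn -e; lia.
  rewrite mulnBr muln1 in hm.
  have : L <= L * km by rewrite -{1}[L]muln1 leq_mul2l; lia.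
  lia.
rewrite negb_forall => /existsP [s1 hs1]; rewrite negbK in hs1.
case: (boolP [forall s : 'I_L, intb s]) => [/forallP hall|].
  apply: (all_internal finj hn hb (ltac:(lia)) Hmod H1b (fun s => H1 s.+1) H4).
  move=> s; rewrite Hmod; by have /existsP := hall (Ordinal (ltn_pmod s (ltnW hL))).
rewrite negb_forall => /existsP [s0 hs0].
have [s [hs hs']] : exists s, ~~ intb s /\ intb s.+1.
  case: (boolP [exists s : 'I_L, ~~ intb s && intb s.+1]) => [/existsP [s /andP [h h']]|].
    by exists s.
  rewrite negb_exists => /forallP hn'.
  have hst : forall s, ~~ intb s -> ~~ intb s.+1.
    move=> s h; have := hn' (Ordinal (ltn_pmod s (ltnW hL))).
    rewrite /intb /= -Hmod h /=.
    have -> : s.+1 = (s %% L).+1 + L * (s %/ L) by rewrite addSn addnC mulnC -divn_eq.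
    by rewrite (Hmod (_ + _)) addnC mulnC modnMDl -Hmod.
  have all : forall d, ~~ intb (s0 + d).
    elim=> [|d IH]; first by rewrite addn0.
    rewrite addnS; exact: hst.
  exfalso; have := all (s1 + s0 * (L - 1)).
  have -> : (s0 + (s1 + s0 * (L - 1))) = s0 * L + s1.
    rewrite mulnBr muln1; have : s0 <= s0 * L by rewrite leq_pmulr; lia.
    lia.
  by rewrite /intb Hmod modnMDl -Hmod => /negP; apply; exact: hs1.
have [j [sg [v [hsg hv ee]]]] := sigP s hs.
have hsB := (HF _ _ hsg).1; have hsc := (HF _ _ hsg).2.
have inBj : forall j0 y, y \in Blk m b j0 -> y \notin B0 m c b.
  by move=> j0 y hy; apply/negP => h; exact: (B0_Blk h hy).
have step0 : Ed s.+1 \subset Blk m b j.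
  case/existsP: hs' => j' hj'.
  have hx : x s.+1 \in Blk m b j' := subsetP hj' _ (H1 s.+1).
  have hxv : x s.+1 = v by apply: (sig_out hsB _ (inBj _ _ hx)); rewrite -ee; exact: H1b.
  have e : j' = j by apply: (Blk_disj hx); rewrite hxv.
  by rewrite -e.
have chain : forall d, d < L.-1 -> Ed (s + d.+1) \subset Blk m b j.
  elim=> [|d IH] hd; first by rewrite addn1.
  have hprev := IH (ltnW hd).
  have hx : x (s + d.+2) \in Blk m b j.
    apply: (subsetP hprev); rewrite (addnS s d.+1); exact: H1b.
  case: (redP (Hred (s + d.+2))) => [[j'' hj'']|[j' [sg' [v' [hsg' hv' ee']]]]].
    have e : j'' = j by apply: (Blk_disj _ hx); exact: (subsetP hj'' _ (H1 _)).
    by rewrite -e.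
  exfalso.
  have hxv' : x (s + d.+2) = v'.
    by apply: (sig_out (HF _ _ hsg').1 _ (inBj _ _ hx)); rewrite -ee'; exact: H1.
  have ejj : j' = j by apply: (Blk_disj hv'); rewrite -hxv'.
  rewrite ejj in hsg'.
  have esg := PQ _ _ _ hsg' hsg.
  have c1 : #|Ed s :&: Ed (s + d.+2)| <= 1.
    apply: H2; apply: modD_neq; apply/andP; split => //; lia.
  have : #|sg| <= #|Ed s :&: Ed (s + d.+2)|.
    apply: subset_leq_card; rewrite subsetI ee ee' esg; apply/andP; split; exact: subsetUl.
  lia.
have hlast := chain L.-2 (ltac:(lia)).
have hxL : x (s + L) \in Blk m b j.
  apply: (subsetP hlast); have -> : s + L = (s + L.-2.+1).+1 by lia.
  exact: H1b.
have e1 : x (s + L) = x s by rewrite Hxmod modnDr -Hxmod.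
rewrite e1 in hxL.
have hv1 : x s = v by apply: (sig_out hsB _ (inBj _ _ hxL)); rewrite -ee; exact: H1.
have hx1 : x s.+1 \in Blk m b j := subsetP step0 _ (H1 _).
have hv2 : x s.+1 = v by apply: (sig_out hsB _ (inBj _ _ hx1)); rewrite -ee; exact: H1b.
by apply: (H3 s); rewrite hv1 hv2.
Qed.


Definition ES (n k : nat) (i : nat) : {set 'I_n} :=
  [set v : 'I_n | [exists j : 'I_k, val v == (i * (k - 1) + j) %% n]].

Lemma memES n k L i (v : 'I_n) : 2 <= k -> n = L * (k - 1) -> i < L ->
  (v \in ES n k i) = (v %/ (k - 1) == i) || (val v == (i.+1 %% L) * (k - 1)).
Proof.
move=> hk hn hi; have hv := ltn_ord v.
set km := k - 1 in hn *.
have hkm : 0 < km by rewrite /km; lia.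
rewrite inE; apply/existsP/idP.
- case=> j /eqP hvj; have hj : j <= km by have := ltn_ord j; rewrite /km; lia.
  case: (ltnP (i * km + j) n) => hlt.
    rewrite modn_small // in hvj.
    case: (ltnP j km) => hjk.
      apply/orP; left; apply/eqP; rewrite hvj; nia.
    apply/orP; right; apply/eqP.
    have hj' : nat_of_ord j = km by lia.
    rewrite modn_small; first (rewrite hvj hj'; nia).
    nia.
  have hj' : nat_of_ord j = km by nia.
  have hi' : i.+1 = L by nia.
  have : i * km + j = n by nia.
  move=> e; rewrite e modnn in hvj.
  apply/orP; right; by rewrite hi' modnn hvj.
- case/orP => [/eqP hq|/eqP hr].
    have hr : v %% km < km by rewrite ltn_mod.
    have hk' : v %% km < k by rewrite /km in hr *; lia.
    exists (Ordinal hk') => /=.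
    rewrite -hq -divn_eq modn_small //.
  have hk' : km < k by rewrite /km; lia.
  exists (Ordinal hk') => /=; rewrite hr.
  case: (ltnP i.+1 L) => hiL.
    rewrite modn_small // modn_small; first nia. nia.
  have hi' : i.+1 = L by lia.
  rewrite hi' modnn mul0n; apply/eqP.
  have -> : i * km + km = n by nia.
  by rewrite modnn.
Qed.

Lemma modS_cases i L : i < L -> (i.+1 %% L = i.+1 /\ i.+1 < L) \/ (i.+1 %% L = 0 /\ i.+1 = L).
Proof.
move=> hi; case: (ltnP i.+1 L) => h; first by left; rewrite modn_small.
right; have e : i.+1 = L by lia.
by rewrite e modnn.
Qed.

Lemma ES_key n k L i i' (v : 'I_n) : 2 <= k -> n = L * (k - 1) -> 3 <= L ->
  i < L -> i' < L -> i <> i' -> v \in ES n k i -> v \in ES n k i' ->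
  (i = i'.+1 %% L /\ val v = i * (k - 1)) \/ (i' = i.+1 %% L /\ val v = i' * (k - 1)).
Proof.
move=> hk hn hL hi hi' hne; rewrite !(memES _ hk hn) //.
have hkm : 0 < k - 1 by lia.
case/orP => [/eqP h1|/eqP h1]; case/orP => [/eqP h2|/eqP h2].
- by exfalso; apply: hne; rewrite -h1 -h2.
- left; have e : i = i'.+1 %% L by rewrite -h1 h2 mulnK.
  by rewrite e h2.
- right; have e : i' = i.+1 %% L by rewrite -h2 h1 mulnK.
  by rewrite e h1.
- exfalso; move: h1; rewrite h2 => /eqP; rewrite eqn_pmul2r // => /eqP.
  case: (modS_cases hi) => [[-> ?]|[-> ?]]; case: (modS_cases hi') => [[-> ?]|[-> ?]]; lia.
Qed.

Lemma ES_inter n k L i i' (v1 v2 : 'I_n) : 2 <= k -> n = L * (k - 1) -> 3 <= L ->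
  i < L -> i' < L -> i <> i' -> v1 \in ES n k i -> v1 \in ES n k i' ->
  v2 \in ES n k i -> v2 \in ES n k i' -> v1 = v2.
Proof.
move=> hk hn hL hi hi' hne h1 h1' h2 h2'; apply: val_inj.
case: (ES_key hk hn hL hi hi' hne h1 h1') => [[e1 ->]|[e1 ->]];
case: (ES_key hk hn hL hi hi' hne h2 h2') => [[e2 ->]|[e2 ->]] //; exfalso.
- move: e1 e2; case: (modS_cases hi) => [[-> ?]|[-> ?]]; case: (modS_cases hi') => [[-> ?]|[-> ?]]; lia.
- move: e1 e2; case: (modS_cases hi) => [[-> ?]|[-> ?]]; case: (modS_cases hi') => [[-> ?]|[-> ?]]; lia.
Qed.

Lemma noredC k n m c b (Fam : 'I_c -> {set {set Wt m c b}}) :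
  3 <= k -> 3 * (k - 1) <= n -> n %% (k - 1) = 0 -> b < n ->
  (forall j s, s \in Fam j -> s \subset B0 m c b /\ #|s| = k - 1) ->
  ((forall j j' s s', s \in Fam j -> s' \in Fam j' -> #|s :&: s'| = 1 -> s = s') \/
   ((forall j s s', s \in Fam j -> s' \in Fam j -> s = s') /\
    m < (n %/ (k - 1)) * (k - 2))) ->
  ~ copyW (red Fam) true (loose_cycle k n).
Proof.
move=> hk hn3 hmod hb HF HP [f [finj fred]].
set km := k - 1 in hn3 hmod HF HP *.
set L := n %/ km in HP *.
have hkm : 2 <= km by rewrite /km; lia.
have hn : n = L * km by rewrite /L divnK //; apply/eqP.
have hL : 3 <= L by nia.
have hk2 : 2 <= k by lia.
have hnk : n = L * (k - 1) by [].
have hxlt : forall s, (s %% L) * km < n.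
  move=> s; rewrite hn ltn_mul2r; apply/andP; split; [lia|]; apply: ltn_pmod; lia.
pose Ed s := f @: ES n k (s %% L).
pose x s := f (Ordinal (hxlt s)).
have HL0 : 0 < L by lia.
have Hmod : forall s, Ed s = Ed (s %% L) by move=> s; rewrite /Ed modn_mod.
have Hxmod : forall s, x s = x (s %% L).
  by move=> s; rewrite /x; congr f; apply: val_inj => /=; rewrite modn_mod.
have H1 : forall s, x s \in Ed s.
  move=> s; apply: imset_f; rewrite (memES _ hk2 hnk) ?ltn_pmod //=.
  by rewrite mulnK ?eqxx //; lia.
have H1b : forall s, x s.+1 \in Ed s.
  move=> s; apply: imset_f; rewrite (memES _ hk2 hnk) ?ltn_pmod //=.
  apply/orP; right; apply/eqP; congr (_ * _).
  by rewrite -[in RHS]addn1 modnDml addn1.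
have H2 : forall s s', s %% L <> s' %% L -> #|Ed s :&: Ed s'| <= 1.
  move=> s s' hne; apply/card_le1_eqP => y1 y2.
  rewrite !inE => /andP [/imsetP [v1 hv1 ->] /imsetP [w1 hw1 e1]].
  move=> /andP [/imsetP [v2 hv2 ->] /imsetP [w2 hw2 e2]].
  have := finj _ _ e1; have := finj _ _ e2; move=> ee2 ee1; subst w1 w2.
  congr f; apply: (ES_inter hk2 hnk hL _ _ hne hv2 hw2 hv1 hw1); exact: ltn_pmod.
have H3 : forall s, x s <> x s.+1.
  move=> s /finj /(congr1 val) /= /eqP; rewrite eqn_pmul2r; last lia.
  by move/eqP; apply: modS_neq; lia.
have H4 : forall p : 'I_n, f p \in Ed (p %/ km).
  move=> p; apply: imset_f.
  have hp : p %/ km < L by rewrite ltn_divLR; [rewrite -hn | lia].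
  by rewrite modn_small // (memES _ hk2 hnk) // eqxx.
have Hred : forall s, red Fam (Ed s).
  move=> s; apply: fred; apply/imsetP; exists (Ordinal (ltn_pmod s HL0)) => //.
case: HP => [PT|[PQ hm]].
  exact: (cycT finj hn hb hkm (ltnW hL) Hmod H1 H1b H2 H3 H4 Hred HF PT).
apply: (cycQ finj hn hb hkm (ltnW hL) Hmod Hxmod H1 H1b H2 H3 H4 Hred HF PQ).
by have -> : km - 1 = k - 2 by rewrite /km; lia.
Qed.


Lemma bin_ge q j : 1 <= j < q -> q <= 'C(q, j).
Proof.
elim: q j => [|q IH] j /andP [h1 h2] //.
case: j h1 h2 => [//|[|j]] _ h2; first by rewrite bin1.
rewrite binS.
have := IH j.+1 (ltac:(apply/andP; split; lia)).
have : 0 < 'C(q, j.+2) by rewrite bin_gt0; lia.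
lia.
Qed.

Lemma card_Hvert c (a : 'I_c.+1 -> nat) X :
  (forall i : 'I_c.+1, i < c -> X <= a i) -> c * X + a ord_max <= #|{: Hvert a}|.
Proof.
move=> h; rewrite /Hvert card_tagged sumnE big_map big_enum /=.
under eq_bigr => i _ do rewrite card_ord.
rewrite big_ord_recr /= leq_add2r.
apply: (@leq_trans (\sum_(i < c) X)); first by rewrite sum_nat_const card_ord mulnC.
apply: leq_sum => i _; apply: h; by rewrite /= ltn_ord.
Qed.

Unset Implicit Arguments.

Theorem proposition1p10 (k t q chi n T : nat) (a : 'I_chi -> nat) :
  3 <= k -> k - 1 <= t -> k - 1 <= q -> 'C(q, k - 1) < chi ->
  3 * (k - 1) <= n -> n %% (k - 1) = 0 ->
  is_tau (k - 1) t T ->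
  (forall i : 'I_chi, val i < chi - 1 -> (chi - 1) * (k - 2) + maxn T q < a i) ->
  (forall i : 'I_chi, val i = chi - 1 -> a i = t) ->
  (* R(C^{(k)}_{n,1}, H) > (chi-1)(n-1) + max{tau(k-1,t), q} *)
  forall N, N <= (chi - 1) * (n - 1) + maxn T q ->
    ~ ramsey_arrow N (loose_cycle k n) (Hgraph k a).
Proof.
move=> hk ht hq hchi hn3 hmod htau hbig hlast N hN.
case: chi a hchi hbig hlast hN => [|c] a hchi hbig hlast hN; first by [].
have ec : c.+1 - 1 = c by lia.
rewrite ec in hbig hlast hN.
have hC : 0 < 'C(q, k - 1) by rewrite bin_gt0.
have hc : 0 < c by lia.
have hlast' : a ord_max = t by apply: hlast.
have hL : 0 < n %/ (k - 1) by rewrite divn_gt0; lia.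
case: (ltnP N #|{: Hvert a}|) => hfit.
  move=> hR; case: (hR (fun _ => false)) => [[f [finj fc]]|[f [finj fc]]].
    have h0 : [set v : 'I_n | [exists j : 'I_k, val v == (0 * (k - 1) + j) %% n]]
                \in loose_cycle k n by apply/imsetP; exists (Ordinal hL).
    by have := fc _ h0.
  have := leq_card f finj; rewrite card_ord; lia.
set m := maxn T q.
set b := n - 1.
have hW : N <= #|{: Wt m c b}| by rewrite card_sum card_prod !card_ord; lia.
have hb : b < n by rewrite /b; lia.
have hk2 : 2 <= k by lia.
have hbig' : forall i : 'I_c.+1, i < c -> c * (k - 2) + m < a i by move=> i; exact: hbig.
have inlB0 : forall (y : 'I_m), (inl y : Wt m c b) \in B0 m c b by move=> y; rewrite inE.
case: (leqP q T) => hqT.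
-
  have hTm : T <= m by apply: leq_maxl.
  have em : m = T by rewrite /m; apply/maxn_idPl.
  case: htau => [[E [Eunif [Eind Einter]]] _].
  pose g (y : 'I_T) : Wt m c b := inl (widen_ord hTm y).
  have ginj : injective g.
    move=> y1 y2 h; injection h => e; exact: val_inj e.
  pose Fam (j : 'I_c) := [set g @: e | e : {set 'I_T} in E].
  have HF : forall j s, s \in Fam j -> s \subset B0 m c b /\ #|s| = k - 1.
    move=> j s /imsetP [e he ->]; split.
      by apply/subsetP => z /imsetP [y _ ->]; exact: inlB0.
    by rewrite card_imset // Eunif.
  apply: (transfer hW).
    apply: (noredC hk hn3 hmod hb HF); left.
    move=> j j' s s' /imsetP [e he ->] /imsetP [e' he' ->].
    rewrite -imsetI; last by move=> ? ? _ _; exact: ginj.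
    rewrite card_imset // => h1.
    case: (eqVneq e e') => [-> //|hne]; by have := Einter _ _ he he' hne; rewrite h1.
  apply: (noblueH hk2 ht hbig' hlast' HF) => S hS cS.
  pose S' := [set y : 'I_T | g y \in S].
  have eS : g @: S' = S.
    apply/setP => z; apply/imsetP/idP => [[y]|hz]; first by rewrite inE => hy ->.
    have := subsetP hS z hz; rewrite inE; case: z hz => // i hz _.
    have hi : i < T by rewrite -em ltn_ord.
    exists (Ordinal hi); first by rewrite inE /g; have -> : widen_ord hTm (Ordinal hi) = i by apply: val_inj.
    by rewrite /g; congr inl; apply: val_inj.
  have cS' : #|S'| = t by rewrite -cS -eS card_imset.
  have : ~~ independent E S'.
    by apply/negP => /Eind; rewrite cS' ltnn.
  rewrite /independent negb_forall_in => /existsP [e /andP [he]]; rewrite negbK => heS.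
  exists (Ordinal hc), (g @: e); split; first exact: imset_f.
  by rewrite -eS; apply: imsetS.
-
  have em : m = q by rewrite /m; apply/maxn_idPr; exact: ltnW.
  pose K := [set s : {set 'I_m} | #|s| == k - 1].
  have hK : #|K| = 'C(q, k - 1) by rewrite /K card_draws card_ord em.
  pose g (y : 'I_m) : Wt m c b := inl y.
  have ginj : injective g by move=> y1 y2 [].
  pose Fam (j : 'I_c) := [set g @: s | s : {set 'I_m} in [set s in K | index s (enum K) == val j]].
  have HF : forall j s, s \in Fam j -> s \subset B0 m c b /\ #|s| = k - 1.
    move=> j s /imsetP [e he ->]; split.
      by apply/subsetP => z /imsetP [y _ ->]; exact: inlB0.
    rewrite card_imset //; move: he; rewrite !inE => /andP [/eqP -> _] //.
  apply: (transfer hW).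
    apply: (noredC hk hn3 hmod hb HF); right; split.
      move=> j s s' /imsetP [e he ->] /imsetP [e' he' ->].
      move: he he'; rewrite !inE => /andP [hek /eqP hi] /andP [hek' /eqP hi'].
      have : e = e'.
        have h1 := @nth_index _ e e (enum K) (ltac:(by rewrite mem_enum inE)).
        have h2 := @nth_index _ e e' (enum K) (ltac:(by rewrite mem_enum inE)).
        by rewrite -h1 -h2 hi hi'.
      by move=> ->.
    rewrite em.
    set L := n %/ (k - 1).
    have hn : n = L * (k - 1) by rewrite /L divnK //; apply/eqP.
    have hL3 : 3 <= L by nia.
    case: (eqVneq q (k - 1)) => hqk.
      rewrite hqk; nia.
    have hqk' : k <= q by lia.
    have hcq : q <= c.
      have := @bin_ge q (k - 1) (ltac:(apply/andP; split; lia)); lia.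
    have hH := @card_Hvert c a (c * (k - 2) + m + 1)
      (ltac:(by move=> i hi; have := hbig' i hi; lia)).
    rewrite hlast' in hH.
    have h1 : c * (c * (k - 2) + q + 1) + t <= c * (n - 1) + q.
      rewrite -em; apply: leq_trans hH _; apply: leq_trans hfit _; exact: hN.
    have h2 : c * (k - 2) + q + 1 <= n - 1.
      case: (leqP (c * (k - 2) + q + 1) (n - 1)) => // h; exfalso.
      have : c * (n - 1).+1 <= c * (c * (k - 2) + q + 1) by apply: leq_mul.
      rewrite mulnS; lia.
    have h4 : q * (k - 2) <= c * (k - 2) by apply: leq_mul.
    have h3 : q < L.
      case: (leqP L q) => // h; exfalso.
      have : L * (k - 1) <= q * (k - 1) by apply: leq_mul.
      rewrite -hn; have : k - 1 = (k - 2) + 1 by lia.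
      move=> ->; rewrite mulnDr muln1; lia.
    have : L <= L * (k - 2) by rewrite -{1}[L]muln1 leq_mul2l; lia.
    lia.
  apply: (noblueH hk2 ht hbig' hlast' HF) => S hS cS.
  have [sg [hsg csg]] := @sub_of_card _ S (k - 1) (ltac:(lia)).
  pose s0 := [set y : 'I_m | g y \in sg].
  have es0 : g @: s0 = sg.
    apply/setP => z; apply/imsetP/idP => [[y]|hz]; first by rewrite inE => hy ->.
    have := subsetP hS z (subsetP hsg z hz); rewrite inE; case: z hz => // i hz _.
    by exists i; rewrite ?inE.
  have cs0 : #|s0| = k - 1 by rewrite -csg -es0 card_imset.
  have hs0K : s0 \in K by rewrite inE cs0.
  have hidx : index s0 (enum K) < c.
    have : index s0 (enum K) < size (enum K) by rewrite index_mem mem_enum.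
    rewrite -cardE hK; lia.
  exists (Ordinal hidx), sg; split; last by [].
  rewrite -es0; apply: imset_f; by rewrite inE hs0K /=.
Qed.
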